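(* Let $\mathcal{X}\subset\mathbb{R}^d$ be a convex compact set with non-empty interior, let $k\ge 0$ and let $f\in\mathrm{Lip}(k)$. Let $t\ge1$ and let $x_1,\dots,x_t\in\mathcal{X}$ be evaluated points. Then for every $\varepsilon\in(0,k]$ we have $\mathcal{A}_{\varepsilon,t}\subseteq\mathcal{P}_{k,t}$, and for every $\varepsilon>k$ we have $\mathcal{P}_{k,t}\subseteq\mathcal{A}_{\varepsilon,t}$.
   Context: $\mathrm{Lip}(k)=\{g:\mathcal{X}\to\mathbb{R}:\ |g(x)-g(x')|\le k\|x-x'\|_2\ \forall x,x'\in\mathcal{X}\}$. For $\varepsilon>0$, the acceptance region is $\mathcal{A}_{\varepsilon,t}=\{x\in\mathcal{X}: \min_{i=1,\dots,t}(f(x_i)+\varepsilon\|x-x_i\|_2)\ge\max_{j=1,\dots,t}f(x_j)\}$. The set of consistent functions is $\mathcal{F}_{k,t}=\{g\in\mathrm{Lip}(k): g(x_i)=f(x_i)\ \forall i\in\{1,\dots,t\}\}$, and the set of potential maximizers is $\mathcal{P}_{k,t}=\{x\in\mathcal{X}:\ \exists g\in\mathcal{F}_{k,t}\text{ with } x\in\arg\max_{x'\in\mathcal{X}}g(x')\}$. *)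

(* Defs.v *)
From mathcomp Require Import all_boot all_order all_algebra.
From mathcomp Require Import all_classical all_reals all_analysis.
Set Implicit Arguments. Unset Strict Implicit. Unset Printing Implicit Defensive.
Import Order.TTheory GRing.Theory Num.Theory.
Import numFieldNormedType.Exports.
Local Open Scope classical_set_scope.
Local Open Scope ring_scope.

Definition enorm (R : realType) (d : nat) (v : 'rV[R]_d) : R :=
  Num.sqrt (\sum_(i < d) v ord0 i ^+ 2).

(* g is k-Lipschitz on X (w.r.t. the Euclidean norm); functions on X are
   represented as total functions whose values outside X are irrelevant. *)
Definition Lip_on (R : realType) (d : nat) (X : set 'rV[R]_d) (k : R)
    (g : 'rV[R]_d -> R) : Prop :=
  forall x x', X x -> X x' -> `|g x - g x'| <= k * enorm (x - x').

(* Acceptance region A_{eps,t}: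
   min_i (f x_i + eps ||x - x_i||) >= max_j f x_j, written out as:
   for all i and j, f x_i + eps ||x - x_i|| >= f x_j. *)
Definition accept_region (R : realType) (d : nat) (X : set 'rV[R]_d)
    (f : 'rV[R]_d -> R) (t : nat) (xs : 'I_t -> 'rV[R]_d) (eps : R)
    : set 'rV[R]_d :=
  [set x | X x /\ forall i j : 'I_t, f (xs j) <= f (xs i) + eps * enorm (x - xs i)].

Definition consistent_funs (R : realType) (d : nat) (X : set 'rV[R]_d)
    (f : 'rV[R]_d -> R) (t : nat) (xs : 'I_t -> 'rV[R]_d) (k : R)
    : set ('rV[R]_d -> R) :=
  [set g | Lip_on X k g /\ forall i : 'I_t, g (xs i) = f (xs i)].

Definition is_argmax (R : realType) (d : nat) (X : set 'rV[R]_d)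
    (g : 'rV[R]_d -> R) (x : 'rV[R]_d) : Prop :=
  X x /\ forall x', X x' -> g x' <= g x.

Definition potential_max (R : realType) (d : nat) (X : set 'rV[R]_d)
    (f : 'rV[R]_d -> R) (t : nat) (xs : 'I_t -> 'rV[R]_d) (k : R)
    : set 'rV[R]_d :=
  [set x | X x /\ exists g, consistent_funs X f xs k g /\ is_argmax X g x].

(* Main.v *)
Require Import Defs.
From mathcomp Require Import all_boot all_order all_algebra.
From mathcomp Require Import all_classical all_reals all_analysis.
From mathcomp Require Import ring lra.
Import Order.TTheory GRing.Theory Num.Theory.
Import numFieldNormedType.Exports.
Local Open Scope classical_set_scope.
Local Open Scope ring_scope.


Lemma CS (R : realType) d (a b : 'I_d -> R) :
  (\sum_i a i * b i)^+2 <= (\sum_i a i ^+2) * (\sum_i b i ^+ 2).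
Proof.
have H : 0 <= \sum_i \sum_j (a i * b j - a j * b i)^+2.
  by apply: sumr_ge0 => i _; apply: sumr_ge0 => j _; exact: sqr_ge0.
have E1 : forall (p q : 'I_d -> R), \sum_i \sum_j p i * q j = (\sum_i p i) * (\sum_i q i).
  move=> p q; rewrite mulr_suml; apply: eq_bigr => i _; by rewrite mulr_sumr.
have E : \sum_i \sum_j (a i * b j - a j * b i)^+2 =
   \sum_i \sum_j (a i ^+2 * b j ^+ 2) + \sum_i \sum_j (a j ^+2 * b i ^+ 2)
   - 2 * \sum_i \sum_j ((a i * b i) * (a j * b j)).
  rewrite -big_split /= mulr_sumr -sumrB; apply: eq_bigr => i _.
  rewrite -big_split /= mulr_sumr -sumrB; apply: eq_bigr => j _.
  ring.
rewrite E (exchange_big _ _ _ _ _ (fun i j => a j ^+2 * b i ^+ 2)) /= !E1 in H.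
move: H; set A := \sum_i a i ^+ 2; set B := \sum_i b i ^+ 2; set C := \sum_i a i * b i; move=> H; rewrite expr2; move: H; move: (A * B) (C * C) => x y; move=> H; lra.
Qed.

Lemma enorm_ge0 (R : realType) d (v : 'rV[R]_d) : 0 <= enorm v.
Proof. exact: sqrtr_ge0. Qed.

Lemma enorm0 (R : realType) d : enorm (0 : 'rV[R]_d) = 0.
Proof. by rewrite /enorm big1 ?sqrtr0 // => i _; rewrite mxE expr0n. Qed.

Lemma enormN (R : realType) d (v : 'rV[R]_d) : enorm (- v) = enorm v.
Proof. by rewrite /enorm; congr Num.sqrt; apply: eq_bigr => i _; rewrite mxE sqrrN. Qed.

Lemma enormD (R : realType) d (u v : 'rV[R]_d) : enorm (u + v) <= enorm u + enorm v.
Proof.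
rewrite /enorm.
set A := \sum_i u ord0 i ^+ 2; set B := \sum_i v ord0 i ^+ 2.
set C := \sum_i u ord0 i * v ord0 i.
have hC : C ^+ 2 <= A * B by exact: CS.
have hA : 0 <= A by apply: sumr_ge0 => i _; exact: sqr_ge0.
have hB : 0 <= B by apply: sumr_ge0 => i _; exact: sqr_ge0.
have hS : \sum_i (u + v) ord0 i ^+ 2 = A + B + 2 * C.
  rewrite /A /B /C mulr_sumr -!big_split /=; apply: eq_bigr => i _; rewrite mxE; ring.
rewrite hS.
have hW : 0 <= A + B + 2 * C by rewrite -hS; apply: sumr_ge0 => i _; exact: sqr_ge0.
have := sqr_sqrtr hA; have := sqr_sqrtr hB; have := sqr_sqrtr hW.
have := sqrtr_ge0 A; have := sqrtr_ge0 B; have := sqrtr_ge0 (A + B + 2 * C).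
set s := Num.sqrt A; set r := Num.sqrt B; set w := Num.sqrt _.
move=> w0 r0 s0 hw hr hs.
rewrite -hs -hr in hC hW hw.
have hCsr : C <= s * r.
  case: (lerP C (s * r)) => // h; exfalso.
  have h0 : 0 <= s * r by exact: mulr_ge0.
  have : (s * r) * (s * r) < C * C by apply: ltr_pM => //.
  rewrite expr2 in hC; rewrite -expr2 -expr2 in hC *; nra.
case: (lerP w (s + r)) => // h; exfalso.
have : (s + r) * (s + r) < w * w by apply: ltr_pM => //; lra.
rewrite -!expr2 hw; nra.
Qed.

Lemma bigmin_le_idx {R : realType} {I : finType} (c : R) (F : I -> R) :
  \big[Num.min/c]_i F i <= c.
Proof.
apply: (big_rec (fun z => z <= c)) => // i z _ hz.
by rewrite ge_min hz orbT.
Qed.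

Lemma bigmin_le {R : realType} {I : finType} (c : R) (F : I -> R) i :
  \big[Num.min/c]_i F i <= F i.
Proof. by rewrite (bigD1 i) //= ge_min lexx. Qed.

Lemma le_bigmin {R : realType} {I : finType} (c z : R) (F : I -> R) :
  z <= c -> (forall i, z <= F i) -> z <= \big[Num.min/c]_i F i.
Proof.
move=> hc hF; apply: (big_ind (fun w => z <= w)) => //.
by move=> a b ha hb; rewrite le_min ha hb.
Qed.

Lemma le_bigmax {R : realType} {I : finType} (c : R) (F : I -> R) i :
  F i <= \big[Num.max/c]_i F i.
Proof. by rewrite (bigD1 i) //= le_max lexx. Qed.

Lemma bigmax_le {R : realType} {I : finType} (c z : R) (F : I -> R) :
  c <= z -> (forall i, F i <= z) -> \big[Num.max/c]_i F i <= z.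
Proof.
move=> hc hF; apply: (big_ind (fun w => w <= z)) => //.
by move=> a b ha hb; rewrite ge_max ha hb.
Qed.

Theorem proposition2 (R : realType) (d : nat) (X : set 'rV[R]_d)
    (k : R) (f : 'rV[R]_d -> R) (t : nat) (xs : 'I_t -> 'rV[R]_d) :
  convex_set (X : set (convex_lmodType 'rV[R]_d)) ->
  compact X ->
  X° !=set0 ->
  0 <= k ->
  Lip_on X k f ->
  (0 < t)%N ->
  (forall i, X (xs i)) ->
  (forall eps : R, 0 < eps -> eps <= k ->
     accept_region X f xs eps `<=` potential_max X f xs k) /\
  (forall eps : R, k < eps ->
     potential_max X f xs k `<=` accept_region X f xs eps).

Proof.
move=> _ _ _ k0 Lf ht Xxs; split.
- move=> eps e0 ek x [Xx Hacc].
  pose i0 : 'I_t := Ordinal ht.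
  pose h (i : 'I_t) (y : 'rV[R]_d) := f (xs i) + k * enorm (y - xs i).
  pose c := \big[Num.max/f (xs i0)]_j f (xs j).
  pose g (y : 'rV[R]_d) := \big[Num.min/c]_i h i y.
  have fxh : forall i j, f (xs j) <= h i x.
    move=> i j; apply: (le_trans (Hacc i j)); rewrite /h lerD2l.
    by apply: ler_wpM2r => //; exact: enorm_ge0.
  have cle : forall i, c <= h i x by move=> i; apply: bigmax_le.
  have gx : g x = c.
    apply/eqP; rewrite eq_le bigmin_le_idx /=; exact: le_bigmin.
  split => //; exists g; split; last first.
    split => // x' _; rewrite gx; exact: bigmin_le_idx.
  split.
  + have key : forall y y', g y <= g y' + k * enorm (y - y').
      move=> y y'.
      have kD : 0 <= k * enorm (y - y') by apply: mulr_ge0 => //; exact: enorm_ge0.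
      rewrite /g -lerBlDr; apply: le_bigmin.
        by have := bigmin_le_idx c (fun i => h i y); lra.
      move=> i; have := bigmin_le c (fun i => h i y) i; rewrite /= /h => hy.
      have : enorm (y - xs i) <= enorm (y - y') + enorm (y' - xs i).
        by rewrite (_ : y - xs i = (y - y') + (y' - xs i)) ?enormD // addrA subrK.
      move=> /(ler_wpM2l k0); rewrite mulrDr => hh.
      rewrite /g /= in hy *; lra.
    move=> y y' _ _; rewrite ler_norml; apply/andP; split; last first.
      by have := key y y'; lra.
    have := key y' y; rewrite -opprB enormN; lra.
  + move=> i; apply/eqP; rewrite eq_le; apply/andP; split.
      rewrite /g; apply: le_trans (bigmin_le c _ i) _.
      by rewrite /h subrr enorm0 mulr0 addr0.
    rewrite /g; apply: le_bigmin; first exact: le_bigmax.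
    move=> j; rewrite /h.
    have := Lf _ _ (Xxs i) (Xxs j).
    have := ler_norm (f (xs i) - f (xs j)); lra.
- move=> eps ke x [Xx [g [[Lg Cg] [_ Am]]]]; split => // i j.
  have h1 := Am _ (Xxs j).
  have h2 := Lg _ _ Xx (Xxs i).
  have h3 := ler_norm (g x - g (xs i)).
  have h4 : k * enorm (x - xs i) <= eps * enorm (x - xs i).
    by apply: ler_wpM2r; [exact: enorm_ge0 | exact: ltW].
  rewrite -!Cg; lra.
Qed.
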